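(* Consider the $Z_1$-Game on a tree $T$, at a position where at least one vertex is filled. Then, without spending any further tokens (using only the filling rule and the oracle operation), the player can, regardless of the oracle's responses, reach a position in which either all vertices are filled or there is exactly one filled vertex adjacent to two or more unfilled vertices.
   Context: Filling rule: if a filled vertex has exactly one unfilled neighbor (and any number of filled neighbors), that neighbor becomes filled; ''applying the filling rule in a subgraph $H$'' means applying it with neighborhoods taken in $H$. The $Z_q$-Game on $G$ ($q\ge 0$ an integer): initially all vertices are unfilled; a player repeatedly performs one of the following operations until all vertices are filled: (1) for one token, change any vertex from unfilled to filled; (2) at no cost, apply the filling rule in $G$; (3) if $F$ is the current set of filled vertices and $U_1,\dots,U_k$ are the vertex sets of the connected components of $G[V(G)\setminus F]$ with $k\ge q+1$, the player announces a selection of at least $q+1$ of the $U_i$ to an oracle (an adversary), the oracle returns a nonempty subset $\{U_{i_1},\dots,U_{i_\ell}\}$ of the selected components, and the player may at no cost apply the filling rule in $G[F\cup U_{i_1}\cup\cdots\cup U_{i_\ell}]$. The $Z_1$-Game is the case $q=1$. *)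

(* Defs.v *)
From mathcomp Require Import all_boot.
Set Implicit Arguments. Unset Strict Implicit. Unset Printing Implicit Defensive.

Section ZqGame.
Variables (T : finType) (e : rel T).

Definition simple_graph := symmetric e /\ irreflexive e.

Definition acyclic := forall c : seq T, uniq c -> 2 < size c -> ~~ cycle e c.
Definition connected := forall x y : T, connect e x y.
Definition is_tree := simple_graph /\ connected /\ acyclic.

Definition erestr (F : {set T}) : rel T :=
  [rel x y | [&& e x y, x \notin F & y \notin F]].

Definition comp (F : {set T}) (u : T) : {set T} :=
  [set w | (u \notin F) && connect (erestr F) u w].

Definition comps (F : {set T}) : {set {set T}} := [set comp F u | u in ~: F].

(* one application of the filling rule in G[W] (W is a superset of F):
   a filled v with exactly one unfilled neighbour u in G[W] fills u. *)
Definition fstep (W F F' : {set T}) : Prop :=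
  exists v u, [/\ v \in F, u \in W, u \notin F & e v u] /\
     (forall w, w \in W -> w \notin F -> e v w -> w = u) /\ F' = u |: F.

Inductive fsteps (W : {set T}) : {set T} -> {set T} -> Prop :=
| fsteps_refl F : fsteps W F F
| fsteps_step F F' F'' : fstep W F F' -> fsteps W F' F'' -> fsteps W F F''.

(* zq_free_reach q Goal F : in the Z_q-Game, from position F (F = set of
   filled vertices), the player can, using only the free operations (2)
   and (3) and regardless of the oracle's answers, reach a position
   satisfying Goal. *)
Inductive zq_free_reach (q : nat) (Goal : {set T} -> Prop) : {set T} -> Prop :=
| zr_goal F : Goal F -> zq_free_reach q Goal F
| zr_fill F F' : fstep setT F F' -> zq_free_reach q Goal F' -> zq_free_reach q Goal F
| zr_oracle F (S : {set {set T}}) :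
    S \subset comps F -> q < #|S| ->
    (forall R : {set {set T}}, R \subset S -> R != set0 ->
       exists F', fsteps (F :|: cover R) F F' /\ zq_free_reach q Goal F') ->
    zq_free_reach q Goal F.

Definition prop32_goal (F : {set T}) : Prop :=
  F = setT \/ #|[set v in F | 1 < #|[set w in ~: F | e v w]| ]| = 1.

End ZqGame.

(* Main.v *)
Require Import Defs.
From mathcomp Require Import all_boot.
From mathcomp Require Import zify.
Set Implicit Arguments. Unset Strict Implicit. Unset Printing Implicit Defensive.

Section Aux.
Variables (T : finType) (e : rel T).
Hypothesis esym : symmetric e.
Hypothesis eacy : acyclic e.

Lemma erestr_sym (F : {set T}) : symmetric (erestr e F).
Proof. by move=> x y; rewrite /erestr /= esym; case: (x \in F); case: (y \in F). Qed.

Lemma path_unf (F : {set T}) x p : path (erestr e F) x p -> all (fun y => y \notin F) p.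
Proof.
elim: p x => //= y p IH x /andP[/and3P[_ _ hy] hp]. by rewrite hy (IH y).
Qed.

Lemma connect_unf (F : {set T}) x y : x \notin F -> connect (erestr e F) x y -> y \notin F.
Proof.
move=> hx /connectP[p hp ->].
have: all (fun y => y \notin F) (x :: p) by rewrite /= hx (path_unf hp).
by move/allP; apply; apply: mem_last.
Qed.

Lemma nbr_not_conn (F : {set T}) v u1 u2 : v \in F -> e v u1 -> e v u2 -> u1 \notin F ->
  u1 != u2 -> ~~ connect (erestr e F) u1 u2.
Proof.
move=> vF e1 e2 u1F ne; apply/negP => /connectP[p hp hl].
move: hl; case/shortenP: hp => p' hp' up' _ hl.
have hall := path_unf hp'.
have vp : v \notin u1 :: p'.
  apply/negP => vin.
  have: all (fun y => y \notin F) (u1 :: p') by rewrite /= u1F hall.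
  by move/allP/(_ _ vin); rewrite vF.
have sz : 2 < size (v :: u1 :: p').
  case: p' {hp' up' hall vp} hl => [/= h|//]; by rewrite h eqxx in ne.
have := eacy (c := v :: u1 :: p').
rewrite /= -/(uniq (u1 :: p')) vp up' => /(_ isT sz); apply/negP/negPn.
rewrite /cycle rcons_path /= e1 /=.
have -> : path e u1 p'.
  by apply: (sub_path _ hp') => a b /and3P[].
by rewrite -hl esym.
Qed.

Lemma conn_mono (F F' : {set T}) x y : F' \subset F ->
  connect (erestr e F) x y -> connect (erestr e F') x y.
Proof.
move=> sub; apply: connect_sub => a b /and3P[hab ha hb]; apply: connect1.
rewrite /erestr /= hab /=; apply/andP; split.
  by apply: contra ha; apply: (subsetP sub).
by apply: contra hb; apply: (subsetP sub).
Qed.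

Lemma no_double (F : {set T}) v w y1 y2 a b : v \in F -> w \in F -> v != w ->
  e w y1 -> e w y2 -> y1 \notin F -> y2 \notin F -> y1 != y2 ->
  e v a -> e v b -> connect (erestr e F) y1 a -> connect (erestr e F) y2 b -> False.
Proof.
move=> vF wF vw ew1 ew2 y1F y2F y12 eva evb c1 c2.
have cs := sym_connect_sym (erestr_sym F).
have aF := connect_unf y1F c1.
have bF := connect_unf y2F c2.
have ab : a != b.
  apply/eqP => ab; subst b.
  have c12 : connect (erestr e F) y1 y2 by apply: connect_trans c1 _; rewrite cs.
  by move: (nbr_not_conn wF ew1 ew2 y1F y12); rewrite c12.
set F' := F :\ w.
have sub : F' \subset F by apply: subsetDl.
have nF' z : z \notin F -> z \notin F'.
  by move=> hz; apply: contra hz; apply: (subsetP sub).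
have vF' : v \in F' by rewrite in_setD1 vw.
have wF' : w \notin F' by rewrite in_setD1 eqxx.
have cs' := sym_connect_sym (erestr_sym F').
have c1' := conn_mono sub c1. rewrite cs' in c1'.
have c2' := conn_mono sub c2.
have cab : connect (erestr e F') a b.
  apply: connect_trans c1' _.
  apply: (connect_trans (y:=w)).
    by apply: connect1; rewrite /erestr /= esym ew1 nF' // wF'.
  apply: connect_trans c2'.
  by apply: connect1; rewrite /erestr /= ew2 wF' nF'.
by move: (nbr_not_conn vF' eva evb (nF' _ aF) ab); rewrite cab.
Qed.

Lemma step_ok (G : {set T} -> Prop) (F W : {set T}) v u : v \in F -> e v u -> u \notin F -> u \in W ->
  (forall z, z \in W -> z \notin F -> e v z -> connect (erestr e F) u z) ->
  zq_free_reach e 1 G (u |: F) ->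
  exists F', fsteps e W F F' /\ zq_free_reach e 1 G F'.
Proof.
move=> vF evu uF uW hz hr; exists (u |: F); split => //.
apply: (@fsteps_step _ _ _ _ (u |: F)); last by apply: fsteps_refl.
exists v, u; split => //; split => // z zW zF evz.
case: (eqVneq u z) => [->//| nuz].
by move: (nbr_not_conn vF evu evz uF nuz); rewrite hz.
Qed.

Lemma oracle_step (G : {set T} -> Prop) (F : {set T}) v x w y :
  v \in F -> w \in F -> e v x -> x \notin F -> e w y -> y \notin F ->
  ~~ [exists z in Defs.comp e F y, e v z] ->
  (forall u, u \notin F -> zq_free_reach e 1 G (u |: F)) ->
  zq_free_reach e 1 G F.
Proof.
move=> vF wF evx xF ewy yF hno IH.
have nv z : z \in Defs.comp e F y -> ~~ e v z.
  move=> zin; apply/negP => evz; move/negP: hno; apply.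
  by apply/existsP; exists z; rewrite zin evz.
have xin : x \in Defs.comp e F x by rewrite inE xF connect0.
have yin : y \in Defs.comp e F y by rewrite inE yF connect0.
have neq : Defs.comp e F x != Defs.comp e F y.
  by apply/eqP => h; move: (nv x); rewrite -h xin evx => /(_ isT).
apply: (@zr_oracle _ _ _ _ F [set Defs.comp e F x; Defs.comp e F y]).
- apply/subsetP => C; rewrite !inE => /orP[]/eqP->; apply/imsetP.
    by exists x; rewrite ?inE.
  by exists y; rewrite ?inE.
- by rewrite cards2 neq.
move=> R RS R0.
have inS C : C \in R -> C = Defs.comp e F x \/ C = Defs.comp e F y.
  by move=> /(subsetP RS); rewrite !inE => /orP[]/eqP->; [left|right].
have inW u C : C \in R -> u \in C -> u \in F :|: cover R.
  by move=> CR uC; rewrite in_setU; apply/orP; right; apply/bigcupP; exists C.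
case: (boolP (Defs.comp e F x \in R)) => hx.
  apply: (step_ok vF evx xF (inW _ _ hx xin)) => [z zW zF evz|]; last exact: IH.
  move: zW; rewrite in_setU (negbTE zF) /= => /bigcupP[C CR zC].
  case: (inS _ CR) => hC; subst C; first by move: zC; rewrite inE => /andP[].
  by move: (nv _ zC); rewrite evz.
have hy : Defs.comp e F y \in R.
  case/set0Pn: R0 => C CR; case: (inS _ CR) => hC; subst C => //.
  by rewrite CR in hx.
apply: (step_ok wF ewy yF (inW _ _ hy yin)) => [z zW zF ewz|]; last exact: IH.
move: zW; rewrite in_setU (negbTE zF) /= => /bigcupP[C CR zC].
case: (inS _ CR) => hC; subst C; first by rewrite CR in hx.
by move: zC; rewrite inE => /andP[].
Qed.

Lemma crossing (F : {set T}) p a : a \in F -> path e a p -> last a p \notin F ->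
  exists x y, [/\ x \in F, y \notin F & e x y].
Proof.
elim: p a => [a aF _ /=|b p IH a aF /= /andP[eab hp] hl]; first by rewrite aF.
case: (boolP (b \in F)) => bF; first exact: (IH b bF hp hl).
by exists a, b.
Qed.

End Aux.

Theorem proposition3p2 (T : finType) (e : rel T) :
  is_tree e ->
  forall F : {set T}, F != set0 ->
    zq_free_reach e 1 (prop32_goal e) F.
Proof.
move=> [[esym eirr] [econn eacy]] F.
have [n hn] : exists n, #|~: F| < n by exists #|~: F|.+1.
elim: n F hn => [//|n IHn] F hn F0.
have IHu : forall u, u \notin F -> zq_free_reach e 1 (prop32_goal e) (u |: F).
  move=> u uF; apply: IHn.
    have h1 := cardsC F; have h2 := cardsC (u |: F); rewrite cardsU1 uF in h2.
    lia.
  by apply/set0Pn; exists u; rewrite setU11.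
case: (eqVneq F setT) => [->|FT]; first by apply: zr_goal; left.
have [b bF] : exists b, b \notin F.
  apply/existsP; apply: contraR FT => /existsPn hb.
  by apply/eqP/setP => z; rewrite inE; move: (hb z); rewrite negbK.
case/set0Pn: F0 => a aF.
have [v0 [u0 [v0F u0F ev0]]] : exists x y, [/\ x \in F, y \notin F & e x y].
  by case/connectP: (econn a b) => p hp hl; apply: (crossing aF hp); rewrite -hl.
set nb := fun v => [set w in ~: F | e v w].
case: (boolP [exists v in F, #|nb v| == 1]).
  case/existsP => v /andP[vF /cards1P[u hu]].
  have : u \in nb v by rewrite hu set11.
  rewrite inE => /andP[uF evu]; rewrite inE in uF.
  apply: (@zr_fill _ _ _ _ _ (u |: F)); last exact: IHu.
  exists v, u; split; first by split.
  split => // z _ zF evz.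
  have : z \in nb v by rewrite inE inE zF evz.
  by rewrite hu in_set1 => /eqP.
move/existsPn => none1.
set B := [set v in F | 1 < #|[set w in ~: F | e v w]|].
case: (eqVneq #|B| 1) => hB; first by apply: zr_goal; right.
have v0B : v0 \in B.
  rewrite inE v0F /=.
  have h1 : #|nb v0| != 1 by move: (none1 v0); rewrite v0F.
  have h0 : 0 < #|nb v0| by apply/card_gt0P; exists u0; rewrite !inE u0F ev0.
  rewrite /nb in h1 h0; lia.
have [w wB] : exists w, w \in B :\ v0.
  apply/set0Pn; rewrite -card_gt0.
  have := cardsD1 v0 B; rewrite v0B /=.
  have : 0 < #|B| by apply/card_gt0P; exists v0.
  lia.
move: wB; rewrite in_setD1 => /andP[wv0 wB].
move: (v0B) (wB); rewrite !inE => /andP[_ /card_gt1P[x1 [x2 [hx1 _ _]]]].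
move=> /andP[wF /card_gt1P[y1 [y2 [hy1 hy2 y12]]]].
move: hx1 hy1 hy2; rewrite !inE => /andP[x1F ex1] /andP[y1F ey1] /andP[y2F ey2].
case: (boolP [exists z in Defs.comp e F y1, e v0 z]) => h1; last first.
  exact: (oracle_step esym eacy v0F wF ex1 x1F ey1 y1F h1 IHu).
case: (boolP [exists z in Defs.comp e F y2, e v0 z]) => h2; last first.
  exact: (oracle_step esym eacy v0F wF ex1 x1F ey2 y2F h2 IHu).
case/existsP: h1 => z1 /andP[]; rewrite inE => /andP[_ c1] ez1.
case/existsP: h2 => z2 /andP[]; rewrite inE => /andP[_ c2] ez2.
have vw : v0 != w by rewrite eq_sym.
case: (no_double esym eacy v0F wF vw ey1 ey2 y1F y2F y12 ez1 ez2 c1 c2).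
Qed.
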